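(* Let $a,b\in\mathbb{H}$ with $b\in C_a$, and let $P\in\mathbb{H}[q_1,q_2]$ vanish at $(a,b)$. Let $P_{q_2}$ be the partial Cullen derivative of $P$ with respect to $q_2$. If the multiplicity $n$ of the zero $\mathbb{H}\times\{b\}$ of $P$ satisfies $n\ge2$, then ${\rm Res}(P,P_{q_2};q_2)\equiv0$.
   Context: $\mathbb{H}$ denotes the quaternions; for $a\in\mathbb{H}$, $C_a=\{q\in\mathbb{H}: qa=aq\}$. A slice regular polynomial in two quaternionic variables is a function $\mathbb{H}^2\to\mathbb{H}$ of the form $P(q_1,q_2)=\sum_{n=0}^{N}\sum_{m=0}^{M}q_1^nq_2^ma_{n,m}$ with $a_{n,m}\in\mathbb{H}$ (coefficients on the right); the set of these is $\mathbb{H}[q_1,q_2]$, and $\mathbb{H}[q]$ denotes one-variable polynomials $\sum q^na_n$. The $*$-product is $\big(\sum q_1^nq_2^ma_{n,m}\big)*\big(\sum q_1^nq_2^mb_{n,m}\big)=\sum_{n,m}q_1^nq_2^m\sum_{r\le n,s\le m}a_{r,s}b_{n-r,m-s}$; $(q_2-b)^{*n}$ is the $n$-fold $*$-power. The partial Cullen derivative is $P_{q_2}=\sum_{m\ge1}mq_1^{n}q_2^{m-1}a_{n,m}$. Multiplicity: if $P$ vanishes on $\mathbb{H}\times\{b\}$, its multiplicity there is $n\in\mathbb N$ such that $P=(q_2-b)^{*n}*S$ with $S\in\mathbb{H}[q_1,q_2]$ not vanishing identically on $\mathbb{H}\times\{b\}$. Regular resultant: $(\mathbb{H}[q],+,*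 )$ is an Ore domain with skew field of quotients $\mathcal L$; ${\rm Det}^*_N$ is the Dieudonné determinant of $N\times N$ matrices over $\mathcal L$ (the unique homomorphism $GL(N,\mathcal L)\to$ abelianization of $\mathcal L^\times$ sending ${\rm diag}(\lambda_i)$ to the class of $\lambda_1*\cdots*\lambda_N$, set to $0$ on singular matrices), whose value on matrices over $\mathbb{H}[q]$ is identified with a polynomial representative. Writing $P=\sum_{k=0}^rq_2^k*\tilde P_k(q_1)$, $Q=\sum_{k=0}^sq_2^k*\tilde Q_k(q_1)$ with $\tilde P_k,\tilde Q_k\in\mathbb{H}[q_1]$, ${\rm Res}(P,Q;q_2)={\rm Det}^*_{r+s}(B(q_1))$, where $B(q_1)$ is the $(r+s)\times(r+s)$ Sylvester matrix whose $j$-th column ($1\le j\le s$) has $\tilde P_0,\dots,\tilde P_r$ in rows $j,\dots,j+r$, whose $(s+j)$-th column ($1\le j\le r$) has $\tilde Q_0,\dots,\tilde Q_s$ in rows $j,\dots,j+s$, and zeros elsewhere. ''${\rm Res}\equiv0$'' means it is zero. *)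

(* Defs.v *)
From HB Require Import structures.
From mathcomp Require Import all_boot all_order all_algebra.
From mathcomp Require Import reals fraction.
From mathcomp Require Import ring.
Set Implicit Arguments. Unset Strict Implicit. Unset Printing Implicit Defensive.
Import Order.TTheory GRing.Theory Num.Theory.
Local Open Scope ring_scope.

Record quat (F : Type) := Quat { qr : F; qi : F; qj : F; qk : F }.
Arguments Quat {F}.

Section QuatRing.
Variable F : comNzRingType.

Definition quat_to (x : quat F) := (qr x, qi x, qj x, qk x).
Definition quat_of (t : F * F * F * F) := let: (a, b, c, d) := t in Quat a b c d.
Lemma quat_toK : cancel quat_to quat_of. Proof. by case. Qed.

HB.instance Definition _ := Equality.copy (quat F) (can_type quat_toK).
HB.instance Definition _ := Choice.copy (quat F) (can_type quat_toK).

Definition qzero : quat F := Quat 0 0 0 0.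
Definition qone : quat F := Quat 1 0 0 0.
Definition qopp (x : quat F) := Quat (- qr x) (- qi x) (- qj x) (- qk x).
Definition qadd (x y : quat F) :=
  Quat (qr x + qr y) (qi x + qi y) (qj x + qj y) (qk x + qk y).
(* Hamilton product: i^2 = j^2 = k^2 = ijk = -1 *)
Definition qmul (x y : quat F) :=
  Quat (qr x * qr y - qi x * qi y - qj x * qj y - qk x * qk y)
       (qr x * qi y + qi x * qr y + qj x * qk y - qk x * qj y)
       (qr x * qj y - qi x * qk y + qj x * qr y + qk x * qi y)
       (qr x * qk y + qi x * qj y - qj x * qi y + qk x * qr y).

Lemma qaddA : associative qadd.
Proof. by case=> ????[????][????]; rewrite /qadd /=; congr Quat; ring. Qed.
Lemma qaddC : commutative qadd.
Proof. by case=> ????[????]; rewrite /qadd /=; congr Quat; ring. Qed.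
Lemma qadd0 : left_id qzero qadd.
Proof. by case=> ????; rewrite /qadd /=; congr Quat; ring. Qed.
Lemma qaddN : left_inverse qzero qopp qadd.
Proof. by case=> ????; rewrite /qadd /=; congr Quat; ring. Qed.

HB.instance Definition _ := GRing.isZmodule.Build (quat F) qaddA qaddC qadd0 qaddN.

Lemma qmulA : associative qmul.
Proof. by case=> ????[????][????]; rewrite /qmul /=; congr Quat; ring. Qed.
Lemma qmul1 : left_id qone qmul.
Proof. by case=> ????; rewrite /qmul /=; congr Quat; ring. Qed.
Lemma qmulr1 : right_id qone qmul.
Proof. by case=> ????; rewrite /qmul /=; congr Quat; ring. Qed.
Lemma qmulDl : left_distributive qmul qadd.
Proof. by case=> ????[????][????]; rewrite /qmul /= /qadd /=; congr Quat; ring. Qed.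
Lemma qmulDr : right_distributive qmul qadd.
Proof. by case=> ????[????][????]; rewrite /qmul /= /qadd /=; congr Quat; ring. Qed.
Lemma qone_neq0 : qone != 0.
Proof. by apply/eqP => -[] /eqP; rewrite oner_eq0. Qed.

HB.instance Definition _ :=
  GRing.Zmodule_isNzRing.Build (quat F) qmulA qmul1 qmulr1 qmulDl qmulDr qone_neq0.
End QuatRing.

(* H[q] with the *-product is  {poly (quat R)}  (variable central).   *)
(* H[q1,q2] with the *-product is  {poly {poly (quat R)}} : the outer  *)
(* variable is q2, the inner one q1; so P`_m (a polynomial in q1) is  *)
(* the coefficient  \tilde P_m(q1)  in  P = sum_m q2^m * \tilde P_m.   *)
Section SliceReg.
Variable R : realType.
Local Notation H := (quat R).

(* P(x1,x2) = sum_{n,m} x1^n x2^m a_{n,m}, coefficients on the right *)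
Definition eval2 (P : {poly {poly H}}) (x1 x2 : H) : H :=
  \sum_(m < size P) \sum_(n < size P`_m) x1 ^+ n * x2 ^+ m * (P`_m)`_n.

Definition q2_minus (b : H) : {poly {poly H}} := 'X - (b%:P)%:P.

Definition cullen_q2 (P : {poly {poly H}}) : {poly {poly H}} := P^`().

(* Sylvester matrix B(q1) of P and Q with respect to q2 (0-based indices):
   r = deg_{q2} P, s = deg_{q2} Q, size r+s; column j < s carries
   P0..Pr in rows j..j+r, column s+j (j < r) carries Q0..Qs in rows j..j+s. *)
Definition sylvester (P Q : {poly {poly H}}) :
  'M[{poly H}]_((size P).-1 + (size Q).-1) :=
  \matrix_(i, j)
    (if (j < (size Q).-1)%N then
       (if (j <= i)%N then P`_(i - j) else 0)
     else (if (j - (size Q).-1 <= i)%N then Q`_(i - (j - (size Q).-1)) else 0)).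

(* The skew field of quotients L of H[q] (with the star-product) : since q is central, L is
   the quaternion algebra over the rational function field R(q),
   i.e. quat {fraction {poly R}}; H[q] embeds componentwise. *)
Definition Lfield := quat {fraction {poly R}}.

Definition toL (p : {poly H}) : Lfield :=
  Quat (tofrac (map_poly (@qr R) p)) (tofrac (map_poly (@qi R) p))
       (tofrac (map_poly (@qj R) p)) (tofrac (map_poly (@qk R) p)).

Definition invertible_over_L N (B : 'M[{poly H}]_N) : Prop :=
  exists C : 'M[Lfield]_N,
    map_mx toL B *m C = 1%:M /\ C *m map_mx toL B = 1%:M.

(* Res(P,Q;q2) = Det*_{r+s}(B(q1)); by definition the Dieudonne determinant
   is 0 exactly on singular matrices (on GL it takes values in the
   abelianization of L^x, which has no zero).  So "Res == 0" means: *)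
Definition res_vanishes (P Q : {poly {poly H}}) : Prop :=
  ~ invertible_over_L (sylvester P Q).

End SliceReg.

(* Main.v *)
Require Import Defs.
From HB Require Import structures.
From mathcomp Require Import all_boot all_order all_algebra.
From mathcomp Require Import reals.
From mathcomp Require Import fraction ring zify.
Import GRing.Theory.
Local Open Scope ring_scope.

Section Aux.
Variable R : realType.
Local Notation H := (quat R).

Lemma map_qD (f : H -> R) (f0 : f 0 = 0) (fD : forall x y, f (x + y) = f x + f y) (p q : {poly H}) :
  map_poly f (p + q) = map_poly f p + map_poly f q.
Proof. by apply/polyP=> i; rewrite coefD !coef_map_id0 // coefD fD. Qed.

Lemma toLD (p q : {poly H}) : toL (p + q) = toL p + toL q.
Proof.
rewrite /toL !(@map_qD (@qr R)) // !(@map_qD (@qi R)) // !(@map_qD (@qj R)) // !(@map_qD (@qk R)) //.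
rewrite !tofracD. by [].
Qed.

Lemma map_qC (f : H -> R) (f0 : f 0 = 0) (k : H) : map_poly f k%:P = (f k)%:P.
Proof. by apply/polyP=> i; rewrite coef_map_id0 // !coefC; case: (i == 0)%N. Qed.

Lemma toL0 : toL (0 : {poly H}) = 0.
Proof. by rewrite /toL !map_poly0 !tofrac0. Qed.

Lemma qM (x y : H) : x * y = qmul x y. Proof. by []. Qed.
Lemma LM (x y : Lfield R) : x * y = qmul x y. Proof. by []. Qed.

Lemma toLCM (k : H) (p : {poly H}) : toL (k%:P * p) = toL k%:P * toL p.
Proof.
rewrite /toL !map_qC // LM /qmul /=.
rewrite -!tofracM.
congr Quat; rewrite -?tofracB -?tofracD -?tofracB -?tofracD -?tofracB -?tofracD;
 apply: congr1; apply/polyP=> i;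
 rewrite !(coefD, coefB, coefN, coefCM, coef_map_id0) // qM /qmul /=; ring.
Qed.

Lemma toL_sum N (F : 'I_N -> {poly H}) : toL (\sum_(i < N) F i) = \sum_(i < N) toL (F i).
Proof. exact: (big_morph _ toLD toL0). Qed.

Lemma monicM_neq0 (p q : {poly {poly H}}) : p \is monic -> q != 0 -> p * q != 0.
Proof.
move=> mp nq; rewrite -size_poly_eq0 size_monicM //.
have := monic_neq0 mp; rewrite -size_poly_eq0 -lt0n => h1.
move: nq; rewrite -size_poly_eq0 -lt0n => h2; lia.
Qed.

Lemma left_eval0 (k : H) (F : {poly {poly H}}) N : (size F < N)%N ->
  \sum_(i < N) (k ^+ i)%:P * (('X - (k%:P)%:P) * F)`_i = 0.
Proof.
case: N => [//|N] hF.
under eq_bigr => i _ do rewrite polyC_exp mulrBl coefB coefCM mulrBr.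
rewrite sumrB big_ord_recl big_ord_recr /= coefXM /= mulr0 add0r.
have -> : F`_N = 0 by rewrite nth_default.
rewrite mulr0 mulr0 addr0; apply/eqP; rewrite subr_eq0; apply/eqP.
apply: eq_bigr => i _; rewrite coefXM /= mulrA -exprSr; by [].
Qed.

Lemma column0 (k : H) (F : {poly {poly H}}) N j :
  let G := ('X - (k%:P)%:P) * F in (size G + j <= N)%N ->
  \sum_(i < N) (k ^+ i)%:P * (if (j <= i)%N then G`_(i - j) else 0) = 0.
Proof.
move=> G hs; rewrite /G in hs *; clear G.
have [->|nF] := eqVneq F 0.
  by apply: big1 => i _; rewrite mulr0; case: ifP; rewrite ?coef0 mulr0.
have -> : \sum_(i < N) (k ^+ i)%:P * (if (j <= i)%N then (('X - (k%:P)%:P) * F)`_(i - j) else 0)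
  = \sum_(i < N) (k ^+ i)%:P * (('X - (k%:P)%:P) * ('X^j * F))`_i.
  apply: eq_bigr => i _; congr (_ * _).
  rewrite mulrA commr_polyXn -mulrA coefXnM.
  by case: ltnP.
apply: left_eval0.
move: hs; rewrite size_monicM ?monicXsubC // size_XsubC size_monicM ?monicXn //.
rewrite size_polyXn; move: nF; rewrite -size_poly_eq0 -lt0n => h /=; rewrite ?addSn /=; rewrite addnC; exact: id.
Qed.

End Aux.

Theorem proposition4p12 (R : realType) (a b : quat R)
  (P : {poly {poly quat R}}) :
  b * a = a * b ->
  eval2 P a b = 0 ->
  forall (n : nat) (S : {poly {poly quat R}}),
    P = q2_minus b ^+ n * S ->
    ~ (forall x : quat R, eval2 S x b = 0) ->
    (2 <= n)%N ->
    res_vanishes P (cullen_q2 P).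
Proof.
move=> _ _ n S hP hnv hn.
have nS : S != 0.
  apply/eqP => S0; apply: hnv => x; by rewrite S0 /eval2 size_poly0 big_ord0.
case: n hP hn => [|[|m]] // hP _.
set D := q2_minus b in hP.
have mD : D \is monic by rewrite /D /q2_minus monicXsubC.
set T := D ^+ m * S.
have nT : T != 0 by apply: monicM_neq0 => //; apply: monic_exp.
have hP' : P = D * (D * T) by rewrite hP /T !exprS !mulrA.
have nDT : D * T != 0 by apply: monicM_neq0.
have hQ : cullen_q2 P = D * (T + (D * T)^`()).
  by rewrite /cullen_q2 hP' [LHS]derivM /D /q2_minus derivXsubC mul1r mulrDr.
have szD : size D = 2%N by rewrite /D /q2_minus size_XsubC.
have szP : size P = (size (D * T)).+1.
  by rewrite hP' [LHS]size_monicM // szD.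
have szDT : (1 < size (D * T)%R)%N.
  rewrite size_monicM // szD.
  by move: nT; rewrite -size_poly_eq0 -lt0n; case: (size T).
set Q := cullen_q2 P in hQ *.
rewrite /res_vanishes /invertible_over_L => -[C [hBC _]].
set N := ((size P).-1 + (size Q).-1)%N in C hBC *.
have hN : (0 < N)%N by rewrite /N szP /=; exact: (leq_trans (ltnW szDT) (leq_addr _ _)).
pose u : 'rV[Lfield R]_N := \row_i toL ((b ^+ i)%:P).
have uB : u *m map_mx (@toL R) (sylvester P Q) = 0.
  apply/rowP => j; rewrite !mxE.
  under eq_bigr => i _ do rewrite !mxE -toLCM.
  rewrite -toL_sum -[RHS]toL0; congr toL.
  have hj := ltn_ord j.
  have [hjs|hjs] := boolP (j < (size Q).-1)%N.
    have := @column0 R b (D * T) N j; rewrite /= -/(q2_minus b) -/D -hP'; apply.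
    move: hjs hj; move: (nat_of_ord j) => jj; rewrite /N szP /=; lia.
  have := @column0 R b (T + (D * T)^`()) N (j - (size Q).-1); rewrite /= -/(q2_minus b) -/D -hQ; apply.
  move: hjs hj; move: (nat_of_ord j) => jj; rewrite /N szP /=.
  case: (size Q) => [|s] /=; lia.
have u0 : u = 0.
  by rewrite -[u]mulmx1 -hBC mulmxA uB mul0mx.
have := congr1 (fun v : 'rV[Lfield R]_N => qr (v 0 (Ordinal hN))) u0.
rewrite /= !mxE expr0 /toL /= map_qC // polyC1 tofrac1 => /eqP.
by rewrite oner_eq0.
Qed.
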